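(* Let $f,g$ be proper, closed, convex, $K\in\mathbb{R}^{n\times p}$, and let $\mu_f\ge0$, $\mu_{g^*}\ge0$ be such that $f-\tfrac{\mu_f}{2}\|\cdot\|^2$ and $g^*-\tfrac{\mu_{g^*}}{2}\|\cdot\|^2$ are convex. Let $\dot y\in\mathbb{R}^n$, $\hat x^k\in\mathbb{R}^p$, $x^k\in\mathrm{dom} f$, $L_k>0$, and $\beta_{k-1}\ge\beta_k>0$. Define $$y^{k+1}:=\mathrm{prox}_{g^*/\beta_k}\big(\dot y+\tfrac{1}{\beta_k}K\hat x^k\big),\qquad x^{k+1}:=\mathrm{prox}_{f/L_k}\big(\hat x^k-\tfrac{1}{L_k}K^\top y^{k+1}\big).$$ Then for every $x\in\mathrm{dom} f$ and every $\tau_k\in(0,1]$, $$\begin{aligned}F_{\beta_k}(x^{k+1},\dot y)\le{}&(1-\tau_k)F_{\beta_{k-1}}(x^k,\dot y)+\tau_k\mathcal{L}(x,y^{k+1})+\tfrac{L_k\tau_k^2}{2}\big\|\tfrac{1}{\tau_k}[\hat x^k-(1-\tau_k)x^k]-x\big\|^2\\&-\tfrac{\mu_f(1-\tau_k)\tau_k}{2}\|x-x^k\|^2-\tfrac{\tau_k^2}{2}(L_k+\mu_f)\big\|\tfrac{1}{\tau_k}[x^{k+1}-(1-\tau_k)x^k]-x\big\|^2\\&-\tfrac{L_k}{2}\|x^{k+1}-\hat x^k\|^2+\tfrac{1}{2(\mu_{g^*}+\beta_k)}\|K(x^{k+1}-\hat x^k)\|^2\\&-\tfrac{1-\tau_k}{2}\big[\tau_k\beta_k-(\beta_{k-1}-\beta_k)\big]\big\|\nabla_u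 g_{\beta_k}(Kx^k,\dot y)-\dot y\big\|^2.\end{aligned}$$
   Context: $g^*$ is the Fenchel conjugate of $g$; $\mathcal{L}(x,y):=f(x)+\langle Kx,y\rangle-g^*(y)$. For a proper closed convex $h$ and $\gamma>0$, $\mathrm{prox}_{\gamma h}(x):=\arg\min_{z}\{h(z)+\tfrac{1}{2\gamma}\|z-x\|^2\}$. For $\beta>0$, $g_\beta(u,\dot y):=\max_{y}\{\langle u,y\rangle-g^*(y)-\tfrac{\beta}{2}\|y-\dot y\|^2\}$, whose gradient in $u$ is $\nabla_u g_\beta(u,\dot y)=\mathrm{prox}_{g^*/\beta}(\dot y+\tfrac1\beta u)$, and $F_\beta(x,\dot y):=f(x)+g_\beta(Kx,\dot y)$. Norms are Euclidean. *)

(* Defs.v *)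
From mathcomp Require Import all_boot all_order all_algebra.
From mathcomp Require Import boolp classical_sets reals ereal topology normedtype sequences.
Set Implicit Arguments.
Unset Strict Implicit.
Unset Printing Implicit Defensive.
Import Order.TTheory GRing.Theory Num.Theory.
Import numFieldNormedType.Exports.
Local Open Scope classical_set_scope.
Local Open Scope ring_scope.

Section ConvexDefs.
Variable R : realType.

Definition vdot (n : nat) (u v : 'cV[R]_n) : R := \sum_(i < n) u i 0 * v i 0.
Definition sqnorm (n : nat) (u : 'cV[R]_n) : R := vdot u u.

Definition dom (n : nat) (h : 'cV[R]_n -> \bar R) : set 'cV[R]_n :=
  [set x | (h x < +oo)%E].

Definition proper_fun (n : nat) (h : 'cV[R]_n -> \bar R) : Prop :=
  (forall x, (-oo < h x)%E) /\ (exists x, (h x < +oo)%E).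

Definition convex_fun (n : nat) (h : 'cV[R]_n -> \bar R) : Prop :=
  forall (x y : 'cV[R]_n) (t : R), 0 <= t <= 1 ->
    (h (t *: x + (1 - t) *: y)%R <= t%:E * h x + (1 - t)%:E * h y)%E.

(* closed = lower semicontinuous: all sublevel sets are (sequentially) closed *)
Definition closed_fun (n : nat) (h : 'cV[R]_n -> \bar R) : Prop :=
  forall (u : nat -> 'cV[R]_n) (x : 'cV[R]_n) (a : R),
    (forall i : 'I_n, (fun k => u k i 0) @ \oo --> (x i 0 : R)) ->
    (forall k, (h (u k) <= a%:E)%E) -> (h x <= a%:E)%E.

Definition sub_sq (n : nat) (h : 'cV[R]_n -> \bar R) (mu : R) : 'cV[R]_n -> \bar R :=
  fun x => (h x - (mu / 2 * sqnorm x)%:E)%E.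

Definition fconj (n : nat) (g : 'cV[R]_n -> \bar R) : 'cV[R]_n -> \bar R :=
  fun y => ereal_sup (range (fun x => ((vdot x y)%:E - g x)%E)).

Definition is_prox (n : nat) (gamma : R) (h : 'cV[R]_n -> \bar R) (x z : 'cV[R]_n) : Prop :=
  forall w, (h z + (1 / (2 * gamma) * sqnorm (z - x)%R)%:E
             <= h w + (1 / (2 * gamma) * sqnorm (w - x)%R)%:E)%E.
Definition prox (n : nat) (gamma : R) (h : 'cV[R]_n -> \bar R) (x : 'cV[R]_n) : 'cV[R]_n :=
  xget x [set z | is_prox gamma h x z].

Definition g_beta (n : nat) (g : 'cV[R]_n -> \bar R) (beta : R) (u ydot : 'cV[R]_n) : \bar R :=
  ereal_sup (range (fun y =>
    ((vdot u y)%:E - fconj g y - (beta / 2 * sqnorm (y - ydot)%R)%:E)%E)).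

Definition grad_g_beta (n : nat) (g : 'cV[R]_n -> \bar R) (beta : R) (u ydot : 'cV[R]_n)
  : 'cV[R]_n := prox (1 / beta) (fconj g) (ydot + beta^-1 *: u).

Definition F_beta (n p : nat) (f : 'cV[R]_p -> \bar R) (g : 'cV[R]_n -> \bar R)
  (K : 'M[R]_(n, p)) (beta : R) (x : 'cV[R]_p) (ydot : 'cV[R]_n) : \bar R :=
  (f x + g_beta g beta (K *m x) ydot)%E.

Definition Lag (n p : nat) (f : 'cV[R]_p -> \bar R) (g : 'cV[R]_n -> \bar R)
  (K : 'M[R]_(n, p)) (x : 'cV[R]_p) (y : 'cV[R]_n) : \bar R :=
  (f x + (vdot (K *m x) y)%:E - fconj g y)%E.

End ConvexDefs.

(* Main.v *)
Require Import Defs.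
From mathcomp Require Import all_boot all_order all_algebra.
From mathcomp Require Import boolp classical_sets reals ereal topology normedtype sequences.
Import Order.TTheory GRing.Theory Num.Theory.
Import numFieldNormedType.Exports.
Local Open Scope classical_set_scope.
Local Open Scope ring_scope.

From mathcomp Require Import ring lra.


Section An.
Variable R : realType.

Lemma cvg_seqP (u : nat -> R) (l : R) :
  (u @ \oo --> l) <-> (forall e : R, 0 < e -> exists N, forall k, (N <= k)%N -> `|l - u k| < e).
Proof.
rewrite cvgrPdist_lt; split => H e he.
  have [N _ HN] := H e he. by exists N => k hk; apply: HN.
have [N HN] := H e he. by exists N.
Qed.

Lemma cauchy_seq (u : nat -> R) :
  (forall e : R, 0 < e -> exists N, forall j k, (N <= j)%N -> (N <= k)%N -> `|u j - u k| < e) ->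
  exists l : R, u @ \oo --> l.
Proof.
move=> H.
have : cvg (u @ \oo).
  apply: cauchy_cvg; apply/cauchyP => e he.
  have [N HN] := H e he.
  exists (u N); exists N => // k /= hk. rewrite /ball /=. by apply: HN.
move=> hc; exists (limn u); exact: hc.
Qed.

Lemma cvg_sumI n (F : nat -> 'I_n -> R) (l : 'I_n -> R) :
  (forall i, (fun k => F k i) @ \oo --> l i) ->
  (fun k => \sum_(i < n) F k i) @ \oo --> \sum_(i < n) l i.
Proof.
move=> H. apply: cvg_big => //. exact: add_continuous.
Qed.

End An.

Set Implicit Arguments.
Unset Strict Implicit.

Section C.
Variable R : realType.

Lemma vdotC n (u v : 'cV[R]_n) : vdot u v = vdot v u.
Proof. by apply: eq_bigr => i _; rewrite mulrC. Qed.

Lemma sqnorm_ge0 n (u : 'cV[R]_n) : 0 <= sqnorm u.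
Proof. by apply: sumr_ge0 => i _; rewrite -expr2 sqr_ge0. Qed.

Lemma vdot_mulmx n p (K : 'M[R]_(n,p)) x y : vdot (K *m x) y = vdot x (K^T *m y).
Proof.
rewrite /vdot.
under eq_bigr do rewrite mxE big_distrl /=.
rewrite exchange_big /=; apply: eq_bigr => j _.
rewrite mxE big_distrr /=; apply: eq_bigr => i _; rewrite !mxE; ring.
Qed.

Lemma sq_comb_test n (u v : 'cV[R]_n) (t : R) :
  t * sqnorm u + (1 - t) * sqnorm v - t * (1 - t) * sqnorm (u - v)
  = sqnorm (t *: u + (1 - t) *: v).
Proof. rewrite /sqnorm /vdot ?mulr_sumr ?mulr_suml -?sumrN; repeat (rewrite -big_split /=). apply: eq_bigr => i _; rewrite !mxE; ring. Qed.


Lemma sq_comb n (u v : 'cV[R]_n) (t : R) :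
  sqnorm (t *: u + (1 - t) *: v) =
  t * sqnorm u + (1 - t) * sqnorm v - t * (1 - t) * sqnorm (u - v).
Proof.
rewrite /sqnorm /vdot ?mulr_sumr ?mulr_suml -?sumrN; repeat (rewrite -big_split /=).
apply: eq_bigr => i _; rewrite !mxE; ring.
Qed.

Lemma sconv n (h : 'cV[R]_n -> \bar R) (mu : R) :
  (forall x, (-oo < h x)%E) -> convex_fun (sub_sq h mu) ->
  forall x y a b t, h x = a%:E -> h y = b%:E -> 0 <= t <= 1 ->
  exists c, h (t *: x + (1 - t) *: y) = c%:E /\
    c <= t * a + (1 - t) * b - mu / 2 * t * (1 - t) * sqnorm (x - y).
Proof.
move=> hinf hc x y a b t hx hy ht.
have := hc x y t ht. rewrite /sub_sq hx hy -!EFinB -!EFinM -EFinD.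
move: (hinf (t *: x + (1 - t) *: y)).
case: (h (t *: x + (1 - t) *: y)) => [c| |] // _.
  rewrite -EFinB lee_fin sq_comb => H. exists c; split => //. lra.
Qed.

End C.

Section D.
Variable R : realType.

Lemma sq_comb2 n (w z a : 'cV[R]_n) (t : R) :
  sqnorm (t *: w + (1 - t) *: z - a) =
  t * sqnorm (w - a) + (1 - t) * sqnorm (z - a) - t * (1 - t) * sqnorm (w - z).
Proof.
rewrite /sqnorm /vdot ?mulr_sumr ?mulr_suml -?sumrN; repeat (rewrite -big_split /=).
apply: eq_bigr => i _; rewrite !mxE; ring.
Qed.

Lemma half_inv (c : R) : 0 < c -> 1 / (2 * (1 / c)) = c / 2.
Proof. move=> hc; field; lra. Qed.

Lemma limit_t (A B K : R) : 0 <= K ->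
  (forall t, 0 < t <= 1 -> A + K * (1 - t) <= B) -> A + K <= B.
Proof.
move=> hK H; apply/ler_addgt0Pr => e he.
have hKe : 0 < K + e by lra.
have ht : 0 < e / (K + e) <= 1.
  apply/andP; split; first by apply: divr_gt0.
  by rewrite ler_pdivrMr // mul1r; lra.
have := H _ ht.
have : K * (e / (K + e)) <= e.
  rewrite mulrA ler_pdivrMr //. nra.
lra.
Qed.

Lemma qgrowth n (h : 'cV[R]_n -> \bar R) (mu c : R) (a z w : 'cV[R]_n) (hz hw : R) :
  (forall x, (-oo < h x)%E) -> convex_fun (sub_sq h mu) -> 0 <= mu -> 0 < c ->
  is_prox (1 / c) h a z -> h z = hz%:E -> h w = hw%:E ->
  hz + c / 2 * sqnorm (z - a) + (mu + c) / 2 * sqnorm (w - z)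
  <= hw + c / 2 * sqnorm (w - a).
Proof.
move=> hinf hcv hmu hc hp ez ew.
have hD := sqnorm_ge0 (w - z).
apply: limit_t; first by apply: mulr_ge0 => //; apply: divr_ge0; lra.
move=> t ht.
have ht' : 0 <= t <= 1 by apply/andP; lra.
have [cc [ecc hcc]] := sconv hinf hcv ew ez ht'.
have := hp (t *: w + (1 - t) *: z).
rewrite ecc ez half_inv // -!EFinD lee_fin sq_comb2 => H.
have H2 : t * (hz + c / 2 * sqnorm (z - a) + (mu + c) / 2 * sqnorm (w - z) * (1 - t))
   <= t * (hw + c / 2 * sqnorm (w - a)) by lra.
rewrite ler_pM2l in H2; lra.
Qed.

End D.

Section E.
Variable R : realType.

Lemma coord_le n (v : 'cV[R]_n) i : v i 0 * v i 0 <= sqnorm v.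
Proof.
rewrite /sqnorm /vdot (bigD1 i) //= lerDl.
by apply: sumr_ge0 => j _; rewrite -expr2 sqr_ge0.
Qed.

Lemma coord_close n (v w : 'cV[R]_n) i (e : R) : 0 < e ->
  sqnorm (v - w) < e * e -> `|w i 0 - v i 0| < e.
Proof.
move=> he hs.
have := coord_le (v - w) i; rewrite !mxE => hc.
have hn : `|w i 0 - v i 0| ^+ 2 = (v i 0 - w i 0) ^+ 2.
  by rewrite real_normK ?num_real //; ring.
have := normr_ge0 (w i 0 - v i 0).
move: hn; rewrite !expr2 => hn hn0. nra.
Qed.

Lemma small_inv (e : R) : 0 < e -> exists N, forall k, (N <= k)%N -> k.+1%:R^-1 < e.
Proof.
move=> he; have [k0 hk0] := ltr_add_invr he.
rewrite add0r in hk0.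
exists k0 => k hk; apply: le_lt_trans hk0.
by rewrite ler_pV2 ?inE ?ltr0Sn ?unitfE ?pnatr_eq0 // ler_nat ltnS.
Qed.


Lemma local_lb n (h : 'cV[R]_n -> \bar R) (z0 : 'cV[R]_n) (h0 : R) :
  closed_fun h -> h z0 = h0%:E ->
  exists2 d : R, 0 < d & forall u, sqnorm (u - z0) < d -> ((h0 - 1)%:E <= h u)%E.
Proof.
move=> hcl hz0; apply: contrapT => Hn.
have H : forall k : nat, exists u, sqnorm (u - z0) < k.+1%:R^-1 /\ (h u < (h0 - 1)%:E)%E.
  move=> k; apply: contrapT => Hk; apply: Hn; exists k.+1%:R^-1.
    by rewrite invr_gt0 ltr0Sn.
  move=> u hu; apply: contrapT => hlt; apply: Hk; exists u; split => //.
  by move/negP: hlt; rewrite -ltNge.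
have [u hu] := choice H.
have hle : (h z0 <= (h0 - 1)%:E)%E.
  apply: (hcl u) => [i|k].
  - apply/cvg_seqP => e he.
    have [N HN] := small_inv (mulr_gt0 he he).
    exists N => k hk; apply: coord_close => //.
    by apply: lt_trans (HN _ hk); exact: (hu k).1.
  - by apply: ltW; exact: (hu k).2.
by move: hle; rewrite hz0 lee_fin => hh; clear -hh; lra.
Qed.


Lemma sq_par n (x z a : 'cV[R]_n) :
  sqnorm (x - z) <= 2 * sqnorm (x - a) + 2 * sqnorm (z - a).
Proof.
have -> : 2 * sqnorm (x - a) + 2 * sqnorm (z - a) = sqnorm (x - z) + sqnorm (x + z - 2%:R *: a).
  rewrite /sqnorm /vdot ?mulr_sumr ?mulr_suml -?sumrN; repeat (rewrite -big_split /=).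
  apply: eq_bigr => i _; rewrite !mxE; ring.
by rewrite lerDl sqnorm_ge0.
Qed.

Lemma sq_shrink n (x z : 'cV[R]_n) (t : R) :
  sqnorm (t *: x + (1 - t) *: z - z) = t ^+ 2 * sqnorm (x - z).
Proof.
rewrite /sqnorm /vdot ?mulr_sumr ?mulr_suml -?sumrN; repeat (rewrite -big_split /=).
apply: eq_bigr => i _; rewrite !mxE; ring.
Qed.

Lemma global_lb n (h : 'cV[R]_n -> \bar R) (mu c : R) (a z0 : 'cV[R]_n) (h0 : R) :
  (forall x, (-oo < h x)%E) -> convex_fun (sub_sq h mu) -> 0 <= mu -> 0 < c ->
  closed_fun h -> h z0 = h0%:E ->
  exists m0 : R, forall x b, h x = b%:E -> m0 <= b + c / 2 * sqnorm (x - a).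
Proof.
move=> hinf hcv hmu hc hcl hz0.
have [d hd Hd] := local_lb hcl hz0.
set A0 := sqnorm (z0 - a).
have hA0 : 0 <= A0 by apply: sqnorm_ge0.
set invk := 4 / (c * d).
have hcd : 0 < c * d by apply: mulr_gt0.
have hinvk : 0 < invk by apply: divr_gt0.
exists (h0 - 1 - invk - c / 2 * A0) => x b hx.
have hX := sqnorm_ge0 (x - a).
have hpar := sq_par x z0 a.
rewrite -/A0 in hpar.
move: hX hpar; set X := sqnorm (x - a); set D := sqnorm (x - z0) => hX hpar.
have hD0 : 0 <= D by apply: sqnorm_ge0.
have [hDd|hDd] := ltP D d.
  have := Hd x hDd; rewrite hx lee_fin => hb.
  have : 0 <= c / 2 * A0 by apply: mulr_ge0 => //; apply: divr_ge0; lra.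
  have : 0 <= c / 2 * X by apply: mulr_ge0 => //; apply: divr_ge0; lra.
  lra.
set s := Num.sqrt (D / d).
have hs0 : 0 <= s by apply: sqrtr_ge0.
have hss : s ^+ 2 = D / d by rewrite sqr_sqrtr // divr_ge0 //; lra.
have hDs : D = d * s ^+ 2 by rewrite hss; field; lra.
have hs1 : 1 <= s.
  have : 1 <= s ^+ 2 by rewrite hss ler_pdivlMr // mul1r.
  rewrite expr2; nra.
set t := (2 * s)^-1.
have hts : t * (2 * s) = 1 by rewrite mulVf //; lra.
have ht0 : 0 < t by rewrite invr_gt0; lra.
have ht1 : 0 <= t <= 1 by apply/andP; split; nra.
have [cc [hcc hccle]] := sconv hinf hcv hx hz0 ht1.
have hsh := sq_shrink x z0 t.
have hsmall : sqnorm (t *: x + (1 - t) *: z0 - z0) < d.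
  rewrite hsh -/D hDs expr2.
  have : (t * s) * (t * s) = 1 / 4 by have := hts; nra.
  nra.
have := Hd _ hsmall; rewrite hcc lee_fin => hcc2.
have hmu2 : 0 <= mu / 2 * t * (1 - t) * sqnorm (x - z0).
  apply: mulr_ge0; last exact: sqnorm_ge0.
  apply: mulr_ge0; last lra.
  apply: mulr_ge0; last lra.
  apply: divr_ge0; lra.
rewrite -/D in hccle hmu2.
have hb : h0 - 2 * s <= b.
  have : t * (h0 - b) <= 1 by lra.
  move=> htb.
  have : (2 * s) * (t * (h0 - b)) <= 2 * s by nra.
  rewrite mulrA (mulrC (2 * s)) hts mul1r; lra.
have hid : invk / 16 * (c * d * s - 4) ^+ 2 = c * d / 4 * s ^+ 2 - 2 * s + invk.
  rewrite /invk; field; lra.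
have hq : 0 <= invk / 16 * (c * d * s - 4) ^+ 2.
  apply: mulr_ge0; [apply: divr_ge0; lra | exact: sqr_ge0].
have hcX : c / 4 * D - c / 2 * A0 <= c / 2 * X.
  have : c * D <= c * (2 * X + 2 * A0) by rewrite ler_pM2l.
  lra.
rewrite hDs in hcX.
have : c / 4 * (d * s ^+ 2) = c * d / 4 * s ^+ 2 by field.
lra.
Qed.


Lemma cvg_sqn n (x : nat -> 'cV[R]_n) (l : 'I_n -> R) (a : 'cV[R]_n) :
  (forall i, (fun k => x k i 0) @ \oo --> l i) ->
  (fun k => sqnorm (x k - a)) @ \oo --> sqnorm ((\col_i l i) - a).
Proof.
move=> hl; rewrite /sqnorm /vdot.
apply: (@cvg_sumI R n (fun k i => (x k - a) i 0 * (x k - a) i 0)) => i.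
have -> : (fun k => (x k - a) i 0 * (x k - a) i 0) =
  (fun k => (x k i 0 - a i 0) * (x k i 0 - a i 0)) by apply: funext => k; rewrite !mxE.
rewrite !mxE.
apply: cvgM; apply: cvgB => //; exact: cvg_cst.
Qed.


Lemma mid_bound n (h : 'cV[R]_n -> \bar R) (mu c m : R) (a xj xk : 'cV[R]_n) (bj bk ej ek : R) :
  (forall x, (-oo < h x)%E) -> convex_fun (sub_sq h mu) -> 0 <= mu -> 0 < c ->
  (forall x b, h x = b%:E -> m <= b + c / 2 * sqnorm (x - a)) ->
  h xj = bj%:E -> h xk = bk%:E ->
  bj + c / 2 * sqnorm (xj - a) < m + ej -> bk + c / 2 * sqnorm (xk - a) < m + ek ->
  c * sqnorm (xj - xk) <= 4 * (ej + ek).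
Proof.
move=> hinf hcv hmu hc hm hj hk hbj hbk.
have ht : 0 <= (2 : R)^-1 <= 1 by apply/andP; split; lra.
have [cw [hcw hcwle]] := sconv hinf hcv hj hk ht.
have := hm _ _ hcw; rewrite sq_comb2 => hmw.
have hmu2 : 0 <= mu / 2 * 2^-1 * (1 - 2^-1) * sqnorm (xj - xk).
  apply: mulr_ge0; last exact: sqnorm_ge0.
  apply: mulr_ge0; last lra.
  apply: mulr_ge0; last lra.
  apply: divr_ge0; lra.
move: hmw hcwle hmu2 hbj hbk.
set Xj := sqnorm (xj - a); set Xk := sqnorm (xk - a); set D := sqnorm (xj - xk).
move=> *; lra.
Qed.

Lemma prox_ex n (h : 'cV[R]_n -> \bar R) (mu c : R) (a : 'cV[R]_n) :
  (forall x, (-oo < h x)%E) -> convex_fun (sub_sq h mu) -> 0 <= mu -> 0 < c ->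
  closed_fun h -> exists z, is_prox (1 / c) h a z.
Proof.
move=> hinf hcv hmu hc hcl.
have [[z0 hz0]|nofin] := pselect (exists z0, (h z0 < +oo)%E); last first.
  have hoo : forall y, h y = +oo%E.
    move=> y; move: (hinf y); case E: (h y) => [r| |] //.
    by move=> _; exfalso; apply: nofin; exists y; rewrite E ltry.
  by exists a => w; rewrite !hoo.
set h0 := fine (h z0).
have hz0' : h z0 = h0%:E.
  by rewrite /h0; move: (hinf z0) hz0; case: (h z0).
have [m0 Hm0] := global_lb a hinf hcv hmu hc hcl hz0'.
set S := [set r : R | exists x, exists b, h x = b%:E /\ r = b + c / 2 * sqnorm (x - a)].
have hS0 : S (h0 + c / 2 * sqnorm (z0 - a)) by exists z0, h0.
have hlb : lbound S m0 by move=> r [x [b [hx ->]]]; exact: Hm0.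
have hinfS : has_inf S by split; [exists (h0 + c / 2 * sqnorm (z0 - a)) | exists m0].
set m := inf S.
have hm : forall x b, h x = b%:E -> m <= b + c / 2 * sqnorm (x - a).
  move=> x b hx; apply: (ge_inf (hinfS.2)); by exists x, b.
have Hseq : forall k : nat, exists p : 'cV[R]_n * R,
    h p.1 = p.2%:E /\ p.2 + c / 2 * sqnorm (p.1 - a) < m + k.+1%:R^-1.
  move=> k; have hk : 0 < (k.+1%:R : R)^-1 by rewrite invr_gt0 ltr0Sn.
  have [r [x [b [hx ->]]] hr] := inf_adherent hk hinfS.
  by exists (x, b).
have [f hf] := choice Hseq.
set x := fun k => (f k).1.
set b := fun k => (f k).2.
have hxb : forall k, h (x k) = (b k)%:E by move=> k; exact: (hf k).1.
have hxb2 : forall k, b k + c / 2 * sqnorm (x k - a) < m + k.+1%:R^-1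
  by move=> k; exact: (hf k).2.
have hcau : forall i, exists l : R, (fun k => x k i 0) @ \oo --> l.
  move=> i; apply: cauchy_seq => e he.
  have hce : 0 < c * (e * e) / 8 by apply: divr_gt0 => //; apply: mulr_gt0 => //; apply: mulr_gt0.
  have [N HN] := small_inv hce.
  exists N => j k hj hk.
  have := mid_bound hinf hcv hmu hc hm (hxb k) (hxb j) (hxb2 k) (hxb2 j).
  have := HN _ hj; have := HN _ hk => h1 h2 h3.
  apply: coord_close => //.
  rewrite -(ltr_pM2l hc); move: h1 h2 h3; generalize (sqnorm (x k - x j)) => D; set ki := (k.+1%:R^-1 : R); set ji := (j.+1%:R^-1 : R).
  clearbody ki ji; move=> h1 h2 h3; clear -h1 h2 h3; lra.
have [l hl] := choice hcau.
set zl := \col_i l i.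
have hq := cvg_sqn (a := a) hl.
set q := sqnorm (zl - a).
have hzl : forall e, 0 < e -> (h zl <= (m - c / 2 * q + e)%:E)%E.
  move=> e he.
  have hec : 0 < e / c by apply: divr_gt0.
  have [N1 HN1] := (cvg_seqP _ _ _).1 hq _ hec.
  have he2 : 0 < e / 2 by apply: divr_gt0 => //; lra.
  have [N2 HN2] := small_inv he2.
  apply: (hcl (fun k => x (k + maxn N1 N2)%N)) => [i|k].
    rewrite mxE; move: (hl i); rewrite -(cvg_shiftn (maxn N1 N2)); exact.
  rewrite hxb lee_fin.
  have hk1 : (N1 <= k + maxn N1 N2)%N by rewrite (leq_trans (leq_maxl N1 N2)) // leq_addl.
  have hk2 : (N2 <= k + maxn N1 N2)%N by rewrite (leq_trans (leq_maxr N1 N2)) // leq_addl.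
  have := HN1 _ hk1; have := HN2 _ hk2; have := hxb2 (k + maxn N1 N2)%N.
  rewrite -/q.
  move: (b _) (sqnorm (x (k + maxn N1 N2)%N - a)) ((k + maxn N1 N2)%N.+1%:R^-1) => bb qq ii h1 h2 h3.
  have h4 : q - qq <= e / c by apply: le_trans (ler_norm _) (ltW h3).
  have : c * (q - qq) <= c * (e / c) by rewrite ler_pM2l.
  have -> : c * (e / c) = e by field; lra.
  lra.
have [bl hbl] : exists bl, h zl = bl%:E.
  move: (hinf zl) (hzl 1 ltr01); case: (h zl) => [r| |] //; by exists r.
have hblm : bl + c / 2 * q <= m.
  have : bl <= m - c / 2 * q.
    apply/ler_addgt0Pr => e he; move: (hzl e he); rewrite hbl lee_fin; lra.
  lra.
exists zl => w; rewrite half_inv // hbl.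
move: (hinf w); case E: (h w) => [bw| |] // _.
  rewrite -!EFinD lee_fin; have := hm _ _ E; rewrite -/q; lra.
by rewrite leey.
Qed.

End E.

Section F.
Variable R : realType.

Lemma fconj_gt n (g : 'cV[R]_n -> \bar R) : proper_fun g -> forall y, (-oo < fconj g y)%E.
Proof.
move=> [hinf [x0 hx0]] y.
have [b hb] : exists b, g x0 = b%:E.
  by move: (hinf x0) hx0; case: (g x0) => [r| |] //; exists r.
apply: (@lt_le_trans _ _ ((vdot x0 y)%:E - g x0)%E).
  by rewrite hb -EFinB ltNyr.
by apply: ereal_sup_ubound; exists x0.
Qed.

Lemma fconj_closed n (g : 'cV[R]_n -> \bar R) : proper_fun g -> closed_fun (fconj g).
Proof.
move=> [hinf _] u y a hu hb.
apply: ge_ereal_sup => _ [x _ <-].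
move: (hinf x); case E: (g x) => [r| |] // _.
- rewrite -EFinB lee_fin.
  have hk : forall k, vdot x (u k) - r <= a.
    move=> k; have := hb k; rewrite -lee_fin EFinB => hk.
    apply: le_trans hk; apply: ereal_sup_ubound; exists x => //; by rewrite E.
  have hcv : (fun k => vdot x (u k)) @ \oo --> vdot x y.
    rewrite /vdot; apply: (@cvg_sumI R n (fun k i => x i 0 * u k i 0)) => i.
    by apply: cvgM => //; exact: cvg_cst.
  apply/ler_addgt0Pr => e he.
  have [N HN] := (cvg_seqP _ _ _).1 hcv _ he.
  have := HN N (leqnn N); have := hk N.
  move: (vdot x (u N)) (vdot x y) => p q h1 h2.
  have := ler_norm (q - p); lra.
- by rewrite /= leNye.
Qed.

Lemma young n (d e : 'cV[R]_n) (k : R) : 0 < k ->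
  vdot d e <= k / 2 * sqnorm e + 1 / (2 * k) * sqnorm d.
Proof.
move=> hk.
have h0 := sqnorm_ge0 (k *: e - d).
have hid : sqnorm (k *: e - d) = k * k * sqnorm e - 2 * k * vdot d e + sqnorm d.
  rewrite /sqnorm /vdot ?mulr_sumr ?mulr_suml -?sumrN; repeat (rewrite -big_split /=).
  apply: eq_bigr => i _; rewrite !mxE; ring.
rewrite hid in h0.
have -> : k / 2 * sqnorm e + 1 / (2 * k) * sqnorm d =
  (k * k * sqnorm e + sqnorm d) / (2 * k) by field; lra.
rewrite ler_pdivlMr; last lra.
lra.
Qed.

Lemma quad_shift n (v yd u : 'cV[R]_n) (beta : R) : beta != 0 ->
  beta / 2 * sqnorm (v - (yd + beta^-1 *: u)) =
  beta / 2 * sqnorm (v - yd) - vdot u v + (vdot u yd + sqnorm u / (2 * beta)).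
Proof.
move=> hb.
rewrite /sqnorm /vdot ?mulr_sumr ?mulr_suml -?sumrN; repeat (rewrite -big_split /=).
apply: eq_bigr => i _; rewrite !mxE; field.
by rewrite ?mulf_neq0 ?pnatr_eq0 //; lra.
Qed.

End F.

Section G.
Variable R : realType.
Variables (n : nat) (g : 'cV[R]_n -> \bar R) (mu beta : R) (u yd yh : 'cV[R]_n) (s : R).
Hypotheses (hinf : forall y, (-oo < fconj g y)%E) (hcv : convex_fun (sub_sq (fconj g) mu))
  (hmu : 0 <= mu) (hb : 0 < beta)
  (hp : is_prox (1 / beta) (fconj g) (yd + beta^-1 *: u) yh) (hs : fconj g yh = s%:E).

Definition psi (y : 'cV[R]_n) (t : R) := vdot u y - t - beta / 2 * sqnorm (y - yd).

Lemma psi_growth y t : fconj g y = t%:E ->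
  psi y t + (mu + beta) / 2 * sqnorm (y - yh) <= psi yh s.
Proof.
move=> ht.
have := qgrowth hinf hcv hmu hb hp hs ht.
rewrite !quad_shift ?gt_eqF //.
rewrite /psi (vdotC u yh) (vdotC u y); lra.
Qed.

Lemma gb_val : g_beta g beta u yd = (psi yh s)%:E.
Proof.
apply/eqP; rewrite eq_le; apply/andP; split.
  apply: ge_ereal_sup => _ [y _ <-].
  move: (hinf y); case E: (fconj g y) => [t| |] // _.
    rewrite -!EFinB lee_fin; have := psi_growth E.
    have := sqnorm_ge0 (y - yh).
    have : 0 <= (mu + beta) / 2 by apply: divr_ge0 => //; exact: addr_ge0 hmu (ltW hb).
    rewrite /psi => h1 h2 h3; have := mulr_ge0 h1 h2; lra.
  by rewrite /= leNye.
apply: ereal_sup_ubound; exists yh => //; by rewrite hs /psi -!EFinB.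
Qed.

Lemma gb_other beta' : beta <= beta' ->
  exists G, g_beta g beta' u yd = G%:E /\
    psi yh s - (beta' - beta) / 2 * sqnorm (yh - yd) <= G.
Proof.
move=> hbb.
have hlo : ((psi yh s - (beta' - beta) / 2 * sqnorm (yh - yd))%:E <= g_beta g beta' u yd)%E.
  apply: ereal_sup_ubound; exists yh => //; rewrite hs /psi -!EFinB; congr (_%:E); ring.
have hup : (g_beta g beta' u yd <= (psi yh s)%:E)%E.
  apply: ge_ereal_sup => _ [y _ <-].
  move: (hinf y); case E: (fconj g y) => [t| |] // _.
    rewrite -!EFinB lee_fin; have := psi_growth E.
    have := sqnorm_ge0 (y - yh).
    have := sqnorm_ge0 (y - yd).
    have : 0 <= (mu + beta) / 2 by apply: divr_ge0 => //; exact: addr_ge0 hmu (ltW hb).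
    rewrite /psi => h1 h2 h3 h4.
    have hq := sqnorm_ge0 (y - yd); have hbb2 : 0 <= beta' - beta by rewrite subr_ge0.
    have := mulr_ge0 hbb2 hq; have := mulr_ge0 h1 h3; lra.
  by rewrite /= leNye.
move: hlo hup; case: (g_beta g beta' u yd) => [G| |] //= h1 h2.
by exists G; split => //; rewrite -lee_fin.
Qed.

Lemma gb_smooth v :
  (g_beta g beta v yd <=
    (vdot v yh - s - beta / 2 * sqnorm (yh - yd) + 1 / (2 * (mu + beta)) * sqnorm (v - u))%:E)%E.
Proof.
apply: ge_ereal_sup => _ [y _ <-].
move: (hinf y); case E: (fconj g y) => [t| |] // _.
  rewrite -!EFinB lee_fin; have := psi_growth E.
  have hmb : 0 < mu + beta by exact: ltr_wpDl hmu hb.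
  have := young (v - u) (y - yh) hmb.
  have -> : vdot v y = vdot u y + vdot (v - u) yh + vdot (v - u) (y - yh).
    rewrite /vdot ?mulr_sumr ?mulr_suml -?sumrN; repeat (rewrite -big_split /=).
    apply: eq_bigr => i _; rewrite !mxE; ring.
  have -> : vdot v yh = vdot u yh + vdot (v - u) yh.
    rewrite /vdot ?mulr_sumr ?mulr_suml -?sumrN; repeat (rewrite -big_split /=).
    apply: eq_bigr => i _; rewrite !mxE; ring.
  rewrite /psi; lra.
by rewrite /= leNye.
Qed.

End G.

Unset Implicit Arguments.
Set Strict Implicit.

Lemma prox_fin (R : realType) n (gam : R) (h : 'cV[R]_n -> \bar R) a z w :
  is_prox gam h a z -> (h w < +oo)%E -> (-oo < h z)%E -> exists s, h z = s%:E.
Proof.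
move=> hp hw hz; have := hp w.
move: hw hz; case: (h w) => [r| |] //; case: (h z) => [s| |] //.
by move=> _ _ _; exists s.
Qed.

Lemma gb_noo (R : realType) n (g : 'cV[R]_n -> \bar R) beta u yd :
  (forall y, fconj g y = +oo%E) -> g_beta g beta u yd = -oo%E.
Proof.
move=> hoo; apply/eqP; rewrite eq_le leNye andbT.
apply: ge_ereal_sup => _ [y _ <-]; rewrite hoo /=.
by rewrite addeNy addNye.
Qed.

Ltac sumtrick := rewrite /sqnorm /vdot ?mulr_sumr ?mulr_suml -?sumrN;
  repeat (rewrite -big_split /=); apply: eq_bigr => i _; rewrite !mxE.

Section Ids.
Variable R : realType.

Lemma idP1 p (xh xk x : 'cV[R]_p) (L tau : R) : tau != 0 ->
  L * tau ^+ 2 / 2 * sqnorm (tau^-1 *: (xh - (1 - tau) *: xk) - x)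
  = L / 2 * sqnorm (tau *: x + (1 - tau) *: xk - xh).
Proof. move=> ht; sumtrick; field. by []. Qed.

Lemma idP2 p (x1 xk x : 'cV[R]_p) (L mu tau : R) : tau != 0 ->
  tau ^+ 2 / 2 * (L + mu) * sqnorm (tau^-1 *: (x1 - (1 - tau) *: xk) - x)
  = (mu + L) / 2 * sqnorm (tau *: x + (1 - tau) *: xk - x1).
Proof. move=> ht; sumtrick; field. by []. Qed.

Lemma idP3 n p (K : 'M[R]_(n, p)) (xh w x1 : 'cV[R]_p) (y1 : 'cV[R]_n) (L : R) : L != 0 ->
  L / 2 * sqnorm (w - (xh - L^-1 *: (K^T *m y1)))
  - L / 2 * sqnorm (x1 - (xh - L^-1 *: (K^T *m y1)))
  = L / 2 * sqnorm (w - xh) - L / 2 * sqnorm (x1 - xh) + vdot (K *m w) y1 - vdot (K *m x1) y1.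
Proof.
move=> hL; rewrite !vdot_mulmx; move: (K^T *m y1) => c.
sumtrick; field. by [].
Qed.

Lemma idP4 n p (K : 'M[R]_(n, p)) (x xk : 'cV[R]_p) (y1 : 'cV[R]_n) (tau : R) :
  vdot (K *m (tau *: x + (1 - tau) *: xk)) y1
  = tau * vdot (K *m x) y1 + (1 - tau) * vdot (K *m xk) y1.
Proof.
rewrite mulmxDr -!scalemxAr; move: (K *m x) (K *m xk) => a b.
sumtrick; ring.
Qed.

Lemma idN1 n (y1 yh yd : 'cV[R]_n) (tau : R) :
  0 <= tau * sqnorm (y1 - yd) + (1 - tau) * sqnorm (y1 - yh) - tau * (1 - tau) * sqnorm (yh - yd).
Proof.
have -> : tau * sqnorm (y1 - yd) + (1 - tau) * sqnorm (y1 - yh) - tau * (1 - tau) * sqnorm (yh - yd)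
  = sqnorm (tau *: (y1 - yd) + (1 - tau) *: (y1 - yh)) by sumtrick; ring.
exact: sqnorm_ge0.
Qed.

End Ids.

Theorem lemma2 (R : realType) (n p : nat)
  (f : 'cV[R]_p -> \bar R) (g : 'cV[R]_n -> \bar R) (K : 'M[R]_(n, p))
  (mu_f mu_gs : R)
  (f_proper : proper_fun f) (f_closed : closed_fun f) (f_convex : convex_fun f)
  (g_proper : proper_fun g) (g_closed : closed_fun g) (g_convex : convex_fun g)
  (mu_f_ge0 : 0 <= mu_f) (mu_gs_ge0 : 0 <= mu_gs)
  (f_strong : convex_fun (sub_sq f mu_f))
  (gs_strong : convex_fun (sub_sq (fconj g) mu_gs))
  (ydot : 'cV[R]_n) (xhat xk : 'cV[R]_p) (xk_dom : dom f xk)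
  (Lk beta_km1 beta_k : R) (Lk_gt0 : 0 < Lk)
  (beta_le : beta_k <= beta_km1) (beta_k_gt0 : 0 < beta_k)
  (y1 : 'cV[R]_n) (x1 : 'cV[R]_p)
  (def_y1 : y1 = prox (1 / beta_k) (fconj g) (ydot + beta_k^-1 *: (K *m xhat)))
  (def_x1 : x1 = prox (1 / Lk) f (xhat - Lk^-1 *: (K^T *m y1))) :
  forall (x : 'cV[R]_p) (tau : R), dom f x -> 0 < tau <= 1 ->
  (F_beta f g K beta_k x1 ydot
   <= (1 - tau)%:E * F_beta f g K beta_km1 xk ydot
      + tau%:E * Lag f g K x y1
      + (Lk * tau ^+ 2 / 2 * sqnorm (tau^-1 *: (xhat - (1 - tau) *: xk) - x)
         - mu_f * (1 - tau) * tau / 2 * sqnorm (x - xk)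
         - tau ^+ 2 / 2 * (Lk + mu_f) * sqnorm (tau^-1 *: (x1 - (1 - tau) *: xk) - x)
         - Lk / 2 * sqnorm (x1 - xhat)
         + 1 / (2 * (mu_gs + beta_k)) * sqnorm (K *m (x1 - xhat))
         - (1 - tau) / 2 * (tau * beta_k - (beta_km1 - beta_k))
             * sqnorm (grad_g_beta g beta_k (K *m xk) ydot - ydot))%:E)%E.
Proof.
move=> x tau hx htau.
have [finf _] := f_proper.
have ginf := fconj_gt g_proper.
have gcl := fconj_closed g_proper.
have ht0 : 0 < tau by case/andP: htau.
have ht1 : tau <= 1 by case/andP: htau.
have htn : tau != 0 by rewrite gt_eqF.
have hLn : Lk != 0 by rewrite gt_eqF.
set a := xhat - Lk^-1 *: (K^T *m y1).
have hpx : is_prox (1 / Lk) f a x1.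
  rewrite def_x1; apply: xgetPex; exact: (prox_ex a finf f_strong mu_f_ge0 Lk_gt0 f_closed).
have [fx1 hfx1] := @prox_fin _ _ _ _ _ _ _ hpx hx (finf x1).
have [fk hfk] : exists r, f xk = r%:E.
  by move: (finf xk) xk_dom; rewrite /dom /=; case: (f xk) => [r| |] //; exists r.
have [fx hfx] : exists r, f x = r%:E.
  by move: (finf x) hx; rewrite /dom /=; case: (f x) => [r| |] //; exists r.
have [[y0 hy0]|nofin] := pselect (exists y0, (fconj g y0 < +oo)%E); last first.
  have hoo : forall y, fconj g y = +oo%E.
    move=> y; move: (ginf y); case E: (fconj g y) => [r| |] //.
    by move=> _; exfalso; apply: nofin; exists y; rewrite E ltry.
  by rewrite /F_beta gb_noo // hfx1 addeNy leNye.
have hpy1 : is_prox (1 / beta_k) (fconj g) (ydot + beta_k^-1 *: (K *m xhat)) y1.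
  rewrite def_y1; apply: xgetPex; exact: (prox_ex _ ginf gs_strong mu_gs_ge0 beta_k_gt0 gcl).
have [s1 hs1] := @prox_fin _ _ _ _ _ _ _ hpy1 hy0 (ginf y1).
set yh := grad_g_beta g beta_k (K *m xk) ydot.
have hpyh : is_prox (1 / beta_k) (fconj g) (ydot + beta_k^-1 *: (K *m xk)) yh.
  rewrite /yh /grad_g_beta /prox; apply: xgetPex.
  exact: (prox_ex _ ginf gs_strong mu_gs_ge0 beta_k_gt0 gcl).
have [sh hsh] := @prox_fin _ _ _ _ _ _ _ hpyh hy0 (ginf yh).
set w := tau *: x + (1 - tau) *: xk.
have ht01 : 0 <= tau <= 1 by apply/andP; split => //; exact: ltW.
have [fw [hfw hfwle]] := sconv finf f_strong hfx hfk ht01.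
have FQ := qgrowth finf f_strong mu_f_ge0 Lk_gt0 hpx hfx1 hfw.
have G1 := gb_smooth ginf gs_strong mu_gs_ge0 beta_k_gt0 hpy1 hs1 (K *m x1).
have G2 := psi_growth ginf gs_strong mu_gs_ge0 beta_k_gt0 hpyh hsh hs1.
have [G [hG G3]] := gb_other ginf gs_strong mu_gs_ge0 beta_k_gt0 hpyh hsh beta_le.
rewrite /F_beta /Lag hfx1 hfk hfx hs1 hG.
move: G1; case: (g_beta g beta_k (K *m x1) ydot) => [gb| |] //; last first.
  by move=> _; rewrite addeNy leNye.
rewrite lee_fin => G1.
rewrite -?EFinD -?EFinN -?EFinD -?EFinM -?EFinD. rewrite lee_fin.
rewrite idP1 // idP2 // mulmxBr.
have P3 := @idP3 R n p K xhat w x1 y1 Lk hLn.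
have P4 := @idP4 R n p K x xk y1 tau.
have N1 := @idN1 R n y1 yh ydot tau.
rewrite /psi in G2 G3.
have h1t : 0 <= 1 - tau by rewrite subr_ge0.
have G2s := ler_wpM2l h1t G2.
have G3s := ler_wpM2l h1t G3.
have hmg : 0 <= (1 - tau) * (mu_gs / 2 * sqnorm (y1 - yh)).
  apply: mulr_ge0 => //; apply: mulr_ge0; last exact: sqnorm_ge0.
  by apply: divr_ge0.
have hbN : 0 <= beta_k / 2 * (tau * sqnorm (y1 - ydot) + (1 - tau) * sqnorm (y1 - yh)
   - tau * (1 - tau) * sqnorm (yh - ydot)).
  by apply: mulr_ge0 => //; apply: divr_ge0 => //; exact: ltW.
rewrite -/a -/w in FQ P3 *.
move: FQ P3 P4 G1 G2s G3s hmg hbN hfwle.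
rewrite -/w.
move: (K *m x) (K *m xk) (K *m x1) (K *m xhat) => Kx Kxk Kx1 Kxh.
move: (sqnorm (x1 - a)) (sqnorm (w - a)) (sqnorm (w - x1)) (sqnorm (w - xhat)) (sqnorm (x1 - xhat)) => A1 A2 W1 Wh X1h.
move: (vdot (K *m w) y1) (vdot Kx1 y1) (vdot Kx y1) (vdot Kxk y1) (vdot Kxk yh) => VW V1 VX VK VKh.
move: (sqnorm (y1 - ydot)) (sqnorm (y1 - yh)) (sqnorm (yh - ydot)) (sqnorm (Kx1 - Kxh)) (sqnorm (x - xk)) => Y1 Y2 Y3 KK D.
move=> FQ P3 P4 G1 G2s G3s hmg hbN hfwle.
clear -FQ P3 P4 G1 G2s G3s hmg hbN hfwle.
lra.
Qed.
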